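(* Let $B(x)=\sum_{n\ge 0} b(n)x^n$ be a formal power series with $b(0)\neq 0$, let $B^{\Delta}(n,k)$ be the composita of $xB(x)$ (so in particular $B^{\Delta}(1,1)=b(0)$), and let $A(x)=1/B(x)$ be the reciprocal series, i.e. $A(x)B(x)=1$. Then the composita $A^{\Delta}(n,m)$ of $xA(x)$ is, for $n\ge m\ge 1$, $$A^{\Delta}(n,m)=\begin{cases}\dfrac{1}{B^{\Delta}(1,1)^m}, & n=m,\\[6pt] \dfrac{1}{B^{\Delta}(1,1)^m}\displaystyle\sum_{k=1}^{n-m}\binom{m+k-1}{m-1}\sum_{j=1}^{k}\frac{(-1)^j}{B^{\Delta}(1,1)^j}\binom{k}{j}B^{\Delta}(n-m+j,j), & n>m.\end{cases}$$
   Context: All generating functions are formal power series in $x$. For a power series $F(x)=\sum_{n\ge 1} f(n)x^n$ with zero constant term, its composita is the two-variable function $F^{\Delta}(n,k)$ ($n\ge k\ge 1$) defined by $F^{\Delta}(n,k)=\sum_{\lambda_1+\cdots+\lambda_k=n}f(\lambda_1)f(\lambda_2)\cdots f(\lambda_k)$, where the sum runs over all compositions of $n$ into exactly $k$ positive integer parts; equivalently $[F(x)]^k=\sum_{n\ge k}F^{\Delta}(n,k)x^n$. *)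

(* Defs.v *)
(* Formal power series over a field F are represented by
   their coefficient sequences  nat -> F. *)
From HB Require Import structures.
From mathcomp Require Import all_boot all_order all_algebra.
Set Implicit Arguments. Unset Strict Implicit. Unset Printing Implicit Defensive.
Import Order.TTheory GRing.Theory Num.Theory.
Local Open Scope ring_scope.

(* A composition is encoded as a
   finite function 'I_k -> 'I_n.+1 (each part is <= n) with all parts >= 1
   and parts summing to n.  The value f 0 is never used. *)
Definition composita (R : comRingType) (f : nat -> R) (n k : nat) : R :=
  \sum_(l : {ffun 'I_k -> 'I_n.+1}
          | [forall i, 0 < (l i : nat)]%N && ((\sum_(i < k) (l i : nat))%N == n))
    \prod_(i < k) f (l i : nat).

(* Coefficient sequence of x * B(x), given that of B(x). *)
Definition xmul (R : ringType) (b : nat -> R) : nat -> R :=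
  fun n => if n is n'.+1 then b n' else 0.

(* Main.v *)
Require Import Defs.
From HB Require Import structures.
From mathcomp Require Import all_boot all_order all_algebra.
From mathcomp Require Import ring zify.
Import Order.TTheory GRing.Theory Num.Theory.
Local Open Scope ring_scope.

Section S.
Variable F : fieldType.

Definition eqN (N : nat) (p q : {poly F}) := forall i, (i < N)%N -> p`_i = q`_i.

Lemma eqN_mul N p p' q q' : eqN N p p' -> eqN N q q' -> eqN N (p * q) (p' * q').
Proof.
move=> hp hq i iN; rewrite !coefM; apply: eq_bigr => j _.
have hj : (j < N)%N by apply: leq_ltn_trans iN; rewrite -ltnS.
have hij : (i - j < N)%N by apply: leq_ltn_trans iN; exact: leq_subr.
by rewrite hp // hq.
Qed.

Lemma eqN_exp N p p' k : eqN N p p' -> eqN N (p ^+ k) (p' ^+ k).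
Proof. by move=> h; elim: k => [|k IH] //; rewrite !exprS; apply: eqN_mul. Qed.

Lemma eqN_sym N p q : eqN N p q -> eqN N q p.
Proof. by move=> h i iN; rewrite h. Qed.

Lemma eqN_trans N p q r : eqN N p q -> eqN N q r -> eqN N p r.
Proof. by move=> h1 h2 i iN; rewrite h1 ?h2. Qed.

Lemma exp_low (p : {poly F}) k i : p`_0 = 0 -> (i < k)%N -> (p ^+ k)`_i = 0.
Proof.
move=> p0; elim: k i => [|k IH] i //; rewrite exprS coefM => ik.
apply: big1 => [[j hj]] _ /=.
case: j hj => [|j] hj; first by rewrite p0 mul0r.
rewrite IH ?mulr0 //.
rewrite ltnS in hj; rewrite ltnS in ik.
by apply: leq_trans ik; rewrite -subSn // leq_subLR addSn ltnS leq_addl.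
Qed.

Lemma compo_poly (f : nat -> F) (p : {poly F}) n k :
  p`_0 = 0 -> (forall i, (0 < i <= n)%N -> p`_i = f i) ->
  composita f n k = (p ^+ k)`_n.
Proof.
move=> p0 pf.
pose q := \poly_(j < n.+1) p`_j.
have eq : eqN n.+1 q p by move=> i iN; rewrite coef_poly iN.
rewrite -(@eqN_exp n.+1 q p k eq) //.
have -> : q ^+ k = \prod_(i < k) \sum_(j < n.+1) (p`_j *: 'X^j).
  by rewrite prodr_const card_ord /q poly_def.
rewrite bigA_distr_bigA /= coef_sum /composita.
rewrite [RHS](bigID (fun l : {ffun 'I_k -> 'I_n.+1} =>
   [forall i, (0 < l i)%N] && ((\sum_(i < k) (l i : nat))%N == n))) /=.
rewrite [X in _ = _ + X]big1 ?addr0.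
  apply: eq_bigr => l /andP[/forallP pos /eqP sum].
  rewrite scaler_prod coefZ.
  have -> : \prod_(i < k) 'X^(l i) = 'X^(\sum_(i < k) (l i : nat)) :> {poly F}.
    by rewrite (big_morph (fun m => 'X^m) (exprD 'X) (expr0 _)).
  rewrite coefXn sum eqxx mulr1; apply: eq_bigr => i _; symmetry; apply: pf.
  by rewrite pos -ltnS ltn_ord.
move=> l; rewrite negb_and => /orP[/forallPn [i]|hs].
  rewrite -eqn0Ngt => /eqP li; rewrite scaler_prod coefZ (bigD1 i) //= li p0.
  by rewrite !mul0r.
rewrite scaler_prod coefZ.
have -> : \prod_(i < k) 'X^(l i) = 'X^(\sum_(i < k) (l i : nat)) :> {poly F}.
  by rewrite (big_morph (fun m => 'X^m) (exprD 'X) (expr0 _)).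
by rewrite coefXn eq_sym (negbTE hs) mulr0.
Qed.
End S.
Section T.
Variable F : fieldType.
Variable D : {poly F}.
Variable N' : nat.

Definition G m := \sum_(k < N'.+1) 'C(m + k, m)%:R *: D ^+ k.

Lemma G_step m : G m.+1 * (1 - D) + 'C(m.+1 + N', m.+1)%:R *: D ^+ N'.+1 = G m.
Proof.
rewrite mulrBr mulr1 /G mulr_suml.
under [X in _ - X + _]eq_bigr => i _ do rewrite -scalerAl -exprSr.
rewrite [X in X - _ + _]big_ord_recl [X in _ - X + _]big_ord_recr [X in _ = X]big_ord_recl /=.
rewrite /bump /=.
under eq_bigr => i _ do rewrite add1n addnS binS addSn natrD scalerDl.
under [X in _ = _ + X]eq_bigr => i _ do rewrite addnS.
under [X in _ - (X + _) + _]eq_bigr => i _ do rewrite addSn.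
rewrite big_split /= !addn0 !binn.
set X := \sum_(i < N') 'C((m + i).+1, m.+1)%:R *: D ^+ i.+1.
set Y := \sum_(i < N') 'C((m + i).+1, m)%:R *: D ^+ i.+1.
set Z := 'C(m.+1 + N', m.+1)%:R *: D ^+ N'.+1.
ring.
Qed.

Lemma G_inv m : exists R, G m * (1 - D) ^+ m.+1 = 1 + D ^+ N'.+1 * R.
Proof.
elim: m => [|m [R IH]].
  exists (-1); rewrite expr1 /G.
  under eq_bigr => i _ do rewrite add0n bin0 scale1r.
  have h := subrX1 D N'.+1.
  have -> : 1 - D = - (D - 1) by rewrite opprB.
  rewrite mulrN mulrC -h; ring.
have h := G_step m.
have e : G m.+1 * (1 - D) = G m - 'C(m.+1 + N', m.+1)%:R *: D ^+ N'.+1.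
  by rewrite -h addrK.
exists (R - 'C(m.+1 + N', m.+1)%:R *: (1 - D) ^+ m.+1).
rewrite exprS mulrA e mulrBl IH -!mul_polyC; ring.
Qed.
End T.
Arguments eqN {F}.
Arguments G {F}.
Arguments G_inv {F}.
Arguments exp_low {F}.
Arguments eqN_mul {F N p p' q q'}.
Arguments eqN_exp {F N p p'} k.
Arguments eqN_sym {F N p q}.
Arguments eqN_trans {F N p q r}.

Lemma sum_trunc (F : fieldType) (f : nat -> F) N c : (c < N)%N ->
  (forall k, (c < k)%N -> f k = 0) -> \sum_(k < N) f k = \sum_(k < c.+1) f k.
Proof.
move=> cN hf; rewrite -!(big_mkord xpredT) (big_cat_nat _ (n:=c.+1)) //=.
rewrite [X in _ + X]big1_seq ?addr0 // => k /andP[_].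
by rewrite mem_index_iota => /andP[h _]; apply: hf.
Qed.

Lemma coef_xpow (F : fieldType) (f : nat -> F) (P : {poly F}) M n' j :
  (n' < M)%N -> (j <= n')%N -> (forall i, (i < M)%N -> P`_i = f i) ->
  composita (xmul f) n' j = (P ^+ j)`_(n' - j).
Proof.
move=> hn hj hP.
have h0 : ('X * P)`_0 = 0 by rewrite coefXM.
have h1 : forall i, (0 < i <= n')%N -> ('X * P)`_i = xmul f i.
  move=> [|i] /andP[] // _ hi; have hiM := ltn_trans hi hn.
  by rewrite coefXM /= hP.
by rewrite (@compo_poly _ _ _ _ j h0 h1) exprMn coefXnM ltnNge hj.
Qed.

Theorem theorem2 (F : fieldType) (b a : nat -> F) :
  b 0%N != 0 ->
  (forall n : nat, \sum_(i < n.+1) a i * b (n - i)%N = (n == 0%N)%:R) ->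
  forall n m : nat, (1 <= m)%N -> (m <= n)%N ->
  composita (xmul a) n m =
    if n == m then 1 / composita (xmul b) 1 1 ^+ m
    else 1 / composita (xmul b) 1 1 ^+ m *
      \sum_(1 <= k < (n - m).+1)
        'C(m + k - 1, m - 1)%:R *
        \sum_(1 <= j < k.+1)
          (-1) ^+ j / composita (xmul b) 1 1 ^+ j * 'C(k, j)%:R *
          composita (xmul b) (n - m + j) j.
Proof.
move=> b0 hab n m m1 mn.
pose N' := (n + n)%N.
pose PB := \poly_(i < N'.+1) b i.
pose PA := \poly_(i < N'.+1) a i.
have hPB : forall i, (i < N'.+1)%N -> PB`_i = b i by move=> i hi; rewrite coef_poly hi.
have hPA : forall i, (i < N'.+1)%N -> PA`_i = a i by move=> i hi; rewrite coef_poly hi.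
have n1 : (1 <= n)%N by apply: leq_trans mn.
have hbeta : composita (xmul b) 1 1 = b 0%N.
  rewrite (@coef_xpow F b PB N'.+1 1 1) //= ?expr1 ?hPB //.
  by rewrite ltnS /N'; apply: leq_trans (leq_addr _ _).
rewrite hbeta.
set beta := b 0%N.
have hAB : eqN N'.+1 (PA * PB) 1.
  move=> i hi; rewrite coefM coef1 -hab; apply: eq_bigr => j _.
  rewrite hPA ?hPB //; first by apply: leq_ltn_trans hi; apply: leq_subr.
  by apply: leq_ltn_trans hi; rewrite -ltnS.
pose D := 1 - beta^-1 *: PB.
have D0 : D`_0 = 0.
  by rewrite /D coefB coefZ coef1 hPB // mulVf // subrr.
have hD : 1 - D = beta^-1 *: PB by rewrite /D opprB addrC subrK.
have [R hR] := G_inv D N' m.-1.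
have hA : eqN N'.+1 (PA ^+ m) ((beta ^- m)%:P * G D N' m.-1).
  have refl : forall p : {poly F}, eqN N'.+1 p p by move=> p i _.
  have hGR : eqN N'.+1 (G D N' m.-1 * (1 - D) ^+ m) 1.
    rewrite -{2}(prednK m1) hR => i hi; rewrite coefD [X in _ + X]coefM big1 ?addr0 //.
    move=> [j hj] _ /=; rewrite exp_low ?mul0r //.
    by apply: leq_trans hi.
  have e : PA ^+ m * (G D N' m.-1 * (1 - D) ^+ m) =
     (beta ^- m)%:P * G D N' m.-1 * (PA * PB) ^+ m.
    rewrite hD -mul_polyC -exprVn rmorphXn /= !exprMn.
    set X1 := (_ %:P ^+ m); set Y1 := G _ _ _; set Z1 := PA ^+ m; set W1 := PB ^+ m; ring.
  rewrite -[PA ^+ m]mulr1.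
  apply: eqN_trans (eqN_mul (refl _) (eqN_sym hGR)) _.
  rewrite e -[X in eqN _ _ X]mulr1 -(expr1n _ m).
  exact: eqN_mul (refl _) (eqN_exp m hAB).
set c := (n - m)%N.
have cN : (c < N'.+1)%N.
  by rewrite ltnS /c /N'; apply: leq_trans (leq_subr _ _) (leq_addr _ _).
rewrite (@coef_xpow F a PA N'.+1 n m) //; last first.
  by rewrite ltnS /N'; apply: leq_addr.
rewrite hA // coefCM /G coef_sum.
under eq_bigr => k _ do rewrite coefZ.
rewrite (@sum_trunc _ (fun k => 'C(m.-1 + k, m.-1)%:R * (D ^+ k)`_c) N'.+1 c cN); last first.
  by move=> k ck; rewrite exp_low // mulr0.
rewrite div1r; case: eqP => [nm|nm].
  have -> : c = 0%N by rewrite /c nm subnn.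
  by rewrite big_ord1 expr0 coef1 addn0 binn mulr1 mulr1.
have c1 : (0 < c)%N by rewrite /c subn_gt0 ltn_neqAle mn andbT; apply/eqP => h; apply: nm; rewrite h.
rewrite -(big_mkord xpredT (fun k => 'C(m.-1 + k, m.-1)%:R * (D ^+ k)`_c)) (big_ltn (m:=0)) // expr0 coef1.
have -> : (c == 0%N) = false by rewrite eqn0Ngt c1.
rewrite mulr0 add0r; congr (_ * _); apply: eq_big_nat => k /andP[k1 kc].
have -> : (m.-1 + k = m + k - 1)%N by lia.
have -> : m.-1 = (m - 1)%N by lia.
congr (_ * _).
rewrite /D exprBn coef_sum big_ord_recl /=.
rewrite !expr0 expr1n !mul1r bin0 mulr1n coef1.
have -> : (c == 0%N) = false by rewrite eqn0Ngt c1.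
rewrite add0r big_add1 /= big_mkord; apply: eq_bigr => j _.
rewrite (@coef_xpow F b PB N'.+1 (c + j.+1) j.+1 _ _ hPB); last 2 first.
- move: (ltn_ord j) kc mn; rewrite /N' /c; lia.
- lia.
rewrite /bump /= add1n addnK expr1n mulr1 exprZn coefMn -scalerAr coefZ.
have -> : (-1) ^+ j.+1 = ((-1) ^+ j.+1)%:P :> {poly F} by rewrite rmorphXn /= polyCN polyC1.
rewrite coefCM exprVn -mulr_natr; ring.
Qed.
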